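(* Let $(P,\le)$ be a finite poset and $v:P\to\mathbb{R}$ a function. In each of the following four cases the given function $d_v:P\times P\to\mathbb{R}$ is a metric on $P$: (i) $\downarrow x\cap\downarrow y\neq\emptyset$ for all $x,y\in P$ and $v$ is a strictly isotone lower valuation; $d_v(x,y)=v(x)+v(y)-2v^-(x,y)$. (ii) $\uparrow x\cap\uparrow y\neq\emptyset$ for all $x,y\in P$ and $v$ is a strictly antitone lower valuation; $d_v(x,y)=v(x)+v(y)-2v^+(x,y)$. (iii) $\uparrow x\cap\uparrow y\neq\emptyset$ for all $x,y\in P$ and $v$ is a strictly isotone upper valuation; $d_v(x,y)=2v^+(x,y)-v(x)-v(y)$. (iv) $\downarrow x\cap\downarrow y\neq\emptyset$ for all $x,y\in P$ and $v$ is a strictly antitone upper valuation; $d_v(x,y)=2v^-(x,y)-v(x)-v(y)$.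
   Context: For a poset $(P,\le)$ and $x\in P$: $\downarrow x=\{x'\in P: x'\le x\}$, $\uparrow x=\{x'\in P: x\le x'\}$. A function $f:P\to\mathbb{R}$ is isotone if $x\le y\Rightarrow f(x)\le f(y)$, strictly isotone if $x<y\Rightarrow f(x)<f(y)$, antitone if $x\le y\Rightarrow f(x)\ge f(y)$, strictly antitone if $x<y\Rightarrow f(x)>f(y)$. For a monotone $f$ and $x,y\in P$ define $f^-(x,y)=\sup\{f(z):z\in\downarrow x\cap\downarrow y\}$ if $f$ is isotone, $=\inf\{f(z):z\in\downarrow x\cap\downarrow y\}$ if $f$ is antitone; $f^+(x,y)=\inf\{f(z):z\in\uparrow x\cap\uparrow y\}$ if $f$ is isotone, $=\sup\{f(z):z\in\uparrow x\cap\uparrow y\}$ if $f$ is antitone; with the conventions $\inf\emptyset=+\infty$, $\sup\emptyset=-\infty$. A lower valuation is either an isotone $v:P\to\mathbb{R}$ such that $\downarrow x\cap\downarrow y\neq\emptyset$ for all $x,y$, or an antitone $v$ such that $\uparrow x\cap\uparrow y\neq\emptyset$ for all $x,y$, satisfying in either case $v(x)+v(y)\le v^-(x,y)+v^+(x,y)$ for all $x,y\in P$. An upper valuation is either an isotone $v$ such that $\uparrow x\cap\uparrow y\neq\emptyset$ for all $x,y$, or an antitone $v$ such that $\downarrow x\cap\downarrow y\neq\emptyset$ for all $x,y$, satisfying in either case $v^-(x,y)+v^+(x,y)\le v(x)+v(y)$ for all $x,y\in P$. *)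

(* Defs.v *)
From HB Require Import structures.
From mathcomp Require Import all_boot all_order all_algebra.
Set Implicit Arguments. Unset Strict Implicit. Unset Printing Implicit Defensive.
Import Order.TTheory GRing.Theory Num.Theory.
Local Open Scope ring_scope.

Section Defs.
Context {d : Order.disp_t} {P : finPOrderType d} {R : realFieldType}.

Definition lowset (x y : P) : {set P} := [set z | (z <= x)%O && (z <= y)%O].
Definition upset (x y : P) : {set P} := [set z | (x <= z)%O && (y <= z)%O].

Definition isotone (f : P -> R) := forall x y : P, (x <= y)%O -> f x <= f y.
Definition strictly_isotone (f : P -> R) := forall x y : P, (x < y)%O -> f x < f y.
Definition antitone (f : P -> R) := forall x y : P, (x <= y)%O -> f y <= f x.
Definition strictly_antitone (f : P -> R) := forall x y : P, (x < y)%O -> f y < f x.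

Inductive ext := Fin of R | PInf | NInf.

Definition ext_le (a b : ext) : Prop :=
  match a, b with
  | NInf, _ => True
  | _, PInf => True
  | Fin a, Fin b => a <= b
  | _, _ => False
  end.

(* +oo + -oo never arises in the definitions below (one summand is always finite). *)
Definition ext_add (a b : ext) : ext :=
  match a, b with
  | Fin a, Fin b => Fin (a + b)
  | PInf, _ | _, PInf => PInf
  | _, _ => NInf
  end.

Definition ext_sup (f : P -> R) (S : {set P}) : ext :=
  if [pick z in S] is Some z0 then Fin (\big[Num.max/f z0]_(z in S) f z) else NInf.
Definition ext_inf (f : P -> R) (S : {set P}) : ext :=
  if [pick z in S] is Some z0 then Fin (\big[Num.min/f z0]_(z in S) f z) else PInf.

Definition ext_val (a : ext) : R := if a is Fin r then r else 0.

(* real-valued sup / inf (used only where the set is nonempty) *)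
Definition fsup (f : P -> R) (S : {set P}) : R := ext_val (ext_sup f S).
Definition finf (f : P -> R) (S : {set P}) : R := ext_val (ext_inf f S).

Definition down_directed := forall x y : P, lowset x y != set0.
Definition up_directed := forall x y : P, upset x y != set0.

Definition minus_iso f x y := ext_sup f (lowset x y).
Definition plus_iso f x y := ext_inf f (upset x y).
Definition minus_anti f x y := ext_inf f (lowset x y).
Definition plus_anti f x y := ext_sup f (upset x y).

Definition lower_valuation (v : P -> R) : Prop :=
  (isotone v /\ down_directed /\
   forall x y, ext_le (Fin (v x + v y)) (ext_add (minus_iso v x y) (plus_iso v x y)))
  \/
  (antitone v /\ up_directed /\
   forall x y, ext_le (Fin (v x + v y)) (ext_add (minus_anti v x y) (plus_anti v x y))).

Definition upper_valuation (v : P -> R) : Prop :=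
  (isotone v /\ up_directed /\
   forall x y, ext_le (ext_add (minus_iso v x y) (plus_iso v x y)) (Fin (v x + v y)))
  \/
  (antitone v /\ down_directed /\
   forall x y, ext_le (ext_add (minus_anti v x y) (plus_anti v x y)) (Fin (v x + v y))).

Definition is_metric (dist : P -> P -> R) : Prop :=
  (forall x y, 0 <= dist x y) /\
  (forall x y, dist x y = 0 <-> x = y) /\
  (forall x y, dist x y = dist y x) /\
  (forall x y z, dist x z <= dist x y + dist y z).

End Defs.

(* Main.v *)
Require Import Defs.
From HB Require Import structures.
From mathcomp Require Import all_boot all_order all_algebra.
Import Order.TTheory GRing.Theory Num.Theory.
Local Open Scope ring_scope.

Lemma two_mul (R : realFieldType) (x : R) : 2 * x = x + x.
Proof. by rewrite mulr_natl mulr2n. Qed.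

Lemma arith_tri (R : realFieldType) (a b c p q s : R) :
  p + q <= b + s -> a + c - 2 * s <= (a + b - 2 * p) + (b + c - 2 * q).
Proof.
move=> h; rewrite !two_mul -subr_ge0.
have -> : a + b - (p + p) + (b + c - (q + q)) - (a + c - (s + s))
   = (b + s - (p + q)) + (b + s - (p + q)).
  rewrite !opprD !opprK !addrA.
  rewrite [LHS]((@GRing.add R).[ACl (2*11*3*7*5*12*4*8*1*9*6*10)]).
  by rewrite addrK addrK.
by rewrite addr_ge0 // subr_ge0.
Qed.

Section Specs.
Context {d : Order.disp_t} {P : finPOrderType d} {R : realFieldType}.

Lemma fsup_spec (f : P -> R) (S : {set P}) : S != set0 ->
  (forall z, z \in S -> f z <= fsup f S) /\ exists2 z, z \in S & fsup f S = f z.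
Proof.
case/set0Pn=> y Hy; rewrite /fsup /ext_sup.
case: pickP => [z0 Hz0|H]; last by have := H y; rewrite Hy.
split=> /=.
  by move=> z Hz; apply: (bigmax_sup z) => //.
elim/big_ind: _ => [|m1 m2 [z1 H1 ->] [z2 H2 ->]|z Hz].
- by exists z0.
- by case: (leP (f z1) (f z2)) => _; [exists z2|exists z1].
- by exists z.
Qed.

Lemma finf_spec (f : P -> R) (S : {set P}) : S != set0 ->
  (forall z, z \in S -> finf f S <= f z) /\ exists2 z, z \in S & finf f S = f z.
Proof.
case/set0Pn=> y Hy; rewrite /finf /ext_inf.
case: pickP => [z0 Hz0|H]; last by have := H y; rewrite Hy.
split=> /=.
  by move=> z Hz; apply: (bigmin_inf z) => //.
elim/big_ind: _ => [|m1 m2 [z1 H1 ->] [z2 H2 ->]|z Hz].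
- by exists z0.
- by case: (leP (f z1) (f z2)) => _; [exists z1|exists z2].
- by exists z.
Qed.
End Specs.

Section Core.
Context {d : Order.disp_t} {P : finPOrderType d} {R : realFieldType}.
Variable r : P -> P -> bool.
Hypotheses (rr : forall x, r x x)
  (rtr : forall x y z, r x y -> r y z -> r x z).
Variable w : P -> R.
Hypothesis siso : forall x y, r x y -> x <> y -> w x < w y.
Variable M : P -> P -> R.
Hypothesis Mub : forall x y z, r z x -> r z y -> w z <= M x y.
Hypothesis Mach : forall x y, exists z, [/\ r z x, r z y & M x y = w z].
Hypothesis val : forall a b y, r a y -> r b y -> w a + w b <= M a b + w y.
Variable dist : P -> P -> R.
Hypothesis Hd : forall x y, dist x y = w x + w y - 2 * M x y.

Lemma iso x y : r x y -> w x <= w y.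
Proof.
move=> h; case: (eqVneq x y) => [->//|ne].
by apply: ltW; apply: siso => //; apply/eqP.
Qed.

Lemma Mle x y : M x y <= w x /\ M x y <= w y.
Proof. by case: (Mach x y) => z [h1 h2 ->]; split; apply: iso. Qed.

Lemma Mxx x : M x x = w x.
Proof. by apply: le_anti; rewrite (Mub _ _ _ (rr x) (rr x)) (proj1 (Mle x x)). Qed.

Lemma Msym x y : M x y = M y x.
Proof.
apply: le_anti; apply/andP; split.
  by case: (Mach x y) => z [h1 h2 ->]; apply: Mub.
by case: (Mach y x) => z [h1 h2 ->]; apply: Mub.
Qed.

Lemma core_metric : is_metric dist.
Proof.
have Hd' : forall x y, dist x y = (w x - M x y) + (w y - M x y).
  by move=> x y; rewrite Hd two_mul opprD addrACA.
split; [|split; [|split]].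
- move=> x y; rewrite Hd'; case: (Mle x y) => h1 h2.
  by rewrite addr_ge0 // subr_ge0.
- move=> x y; split; last by move=> ->; rewrite Hd' Mxx subrr addr0.
  rewrite Hd'; case: (Mle x y) => h1 h2 /eqP.
  rewrite paddr_eq0 ?subr_ge0 // !subr_eq0 => /andP[/eqP e1 /eqP e2].
  case: (Mach x y) => z [hz1 hz2 ez].
  have zx : z = x.
    case: (eqVneq z x) => // /eqP ne.
    by have := siso _ _ hz1 ne; rewrite -ez e1 ltxx.
  have zy : z = y.
    case: (eqVneq z y) => // /eqP ne.
    by have := siso _ _ hz2 ne; rewrite -ez e2 ltxx.
  by rewrite -zx -zy.
- by move=> x y; rewrite !Hd (Msym x y) [w x + _]addrC.
- move=> x y z; rewrite !Hd; apply: arith_tri.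
  case: (Mach x y) => a [ha1 ha2 ->]; case: (Mach y z) => b [hb1 hb2 ->].
  apply: le_trans (val _ _ _ ha2 hb1) _; rewrite [w y + _]addrC lerD2r.
  case: (Mach a b) => c [hc1 hc2 ->].
  exact: Mub _ _ _ (rtr _ _ _ hc1 ha1) (rtr _ _ _ hc2 hb2).
Qed.
End Core.

Section Main.
Context {d : Order.disp_t} {P : finPOrderType d} {R : realFieldType}.

Lemma val_triv (r : P -> P -> bool) (rr : forall x, r x x) (w : P -> R) (M : P -> P -> R)
  (Mub : forall x y z, r z x -> r z y -> w z <= M x y)
  (triv : forall x y, r x y -> x = y) a b y :
  r a y -> r b y -> w a + w b <= M a b + w y.
Proof.
move=> /triv -> /triv ->; rewrite lerD2r; exact: Mub.
Qed.

Lemma ext_sup_fin (f : P -> R) S : S != set0 -> ext_sup f S = Fin (fsup f S).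
Proof.
case/set0Pn=> y Hy; rewrite /fsup /ext_sup.
by case: pickP => [z0 Hz0|H] //; have := H y; rewrite Hy.
Qed.

Lemma ext_inf_fin (f : P -> R) S : S != set0 -> ext_inf f S = Fin (finf f S).
Proof.
case/set0Pn=> y Hy; rewrite /finf /ext_inf.
by case: pickP => [z0 Hz0|H] //; have := H y; rewrite Hy.
Qed.

Lemma ltP' (x y : P) : (x <= y)%O -> x <> y -> (x < y)%O.
Proof. by move=> h ne; rewrite lt_neqAle h andbT; apply/eqP => e; apply: ne. Qed.

Lemma triv_ia (v : P -> R) : strictly_isotone v -> antitone v ->
  forall x y : P, (x <= y)%O -> x = y.
Proof.
move=> hs ha x y h; case: (eqVneq x y) => // /eqP ne.
by have := hs _ _ (ltP' _ _ h ne); rewrite ltNge (ha _ _ h).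
Qed.

Lemma triv_ai (v : P -> R) : strictly_antitone v -> isotone v ->
  forall x y : P, (x <= y)%O -> x = y.
Proof.
move=> hs ha x y h; case: (eqVneq x y) => // /eqP ne.
by have := hs _ _ (ltP' _ _ h ne); rewrite ltNge (ha _ _ h).
Qed.

Lemma in_low (x y z : P) : (z \in lowset x y) = (z <= x)%O && (z <= y)%O.
Proof. by rewrite /lowset inE. Qed.
Lemma in_up (x y z : P) : (z \in upset x y) = (x <= z)%O && (y <= z)%O.
Proof. by rewrite /upset inE. Qed.

End Main.

Theorem mainTheorem1 (d : Order.disp_t) (P : finPOrderType d) (R : realFieldType)
  (v : P -> R) :
  (down_directed (P := P) -> strictly_isotone v -> lower_valuation v ->
     is_metric (fun x y => v x + v y - 2 * fsup v (lowset x y)))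
  /\
  (up_directed (P := P) -> strictly_antitone v -> lower_valuation v ->
     is_metric (fun x y => v x + v y - 2 * fsup v (upset x y)))
  /\
  (up_directed (P := P) -> strictly_isotone v -> upper_valuation v ->
     is_metric (fun x y => 2 * finf v (upset x y) - v x - v y))
  /\
  (down_directed (P := P) -> strictly_antitone v -> upper_valuation v ->
     is_metric (fun x y => 2 * finf v (lowset x y) - v x - v y)).
Proof.
split; [|split; [|split]].
- move=> hdd hs hlv.
  pose r := fun x y : P => (x <= y)%O.
  have rr : forall x, r x x by move=> x; exact: lexx.
  have rtr : forall x y z, r x y -> r y z -> r x z by move=> x y z; exact: le_trans.
  have siso : forall x y, r x y -> x <> y -> v x < v y.
    by move=> x y h ne; apply: hs; apply: ltP'.
  pose M := fun x y => fsup v (lowset x y).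
  have Mub : forall x y z, r z x -> r z y -> v z <= M x y.
    move=> x y z h1 h2; case: (fsup_spec v _ (hdd x y)) => H _; apply: H.
    by rewrite in_low; apply/andP.
  have Mach : forall x y, exists z, [/\ r z x, r z y & M x y = v z].
    move=> x y; case: (fsup_spec v _ (hdd x y)) => _ [z]; rewrite in_low => /andP[h1 h2] e.
    by exists z.
  have val : forall a b y, r a y -> r b y -> v a + v b <= M a b + v y.
    case: hlv => [[hi [_ H]]|[ha _]]; last exact: (val_triv r rr v M Mub (triv_ia _ hs ha)).
    move=> a b y h1 h2; have := H a b.
    have ny : upset a b != set0 by apply/set0Pn; exists y; rewrite in_up; apply/andP.
    rewrite /minus_iso /plus_iso (ext_sup_fin v _ (hdd a b)) (ext_inf_fin v _ ny) /= => h.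
    apply: le_trans h _; rewrite lerD2l.
    by case: (finf_spec v _ ny) => H' _; apply: H'; rewrite in_up; apply/andP.
  apply: (core_metric r rr rtr v siso M Mub Mach val) => x y.
  by [].

- move=> hud hs hlv.
  pose r := fun x y : P => (y <= x)%O.
  have rr : forall x, r x x by move=> x; exact: lexx.
  have rtr : forall x y z, r x y -> r y z -> r x z.
    by move=> x y z h1 h2; exact: le_trans h2 h1.
  have siso : forall x y, r x y -> x <> y -> v x < v y.
    by move=> x y h ne; apply: hs; apply: ltP' => // e; apply: ne.
  pose M := fun x y => fsup v (upset x y).
  have Mub : forall x y z, r z x -> r z y -> v z <= M x y.
    move=> x y z h1 h2; case: (fsup_spec v _ (hud x y)) => H _; apply: H.
    by rewrite in_up; apply/andP.
  have Mach : forall x y, exists z, [/\ r z x, r z y & M x y = v z].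
    move=> x y; case: (fsup_spec v _ (hud x y)) => _ [z]; rewrite in_up => /andP[h1 h2] e.
    by exists z.
  have val : forall a b y, r a y -> r b y -> v a + v b <= M a b + v y.
    case: hlv => [[hi _]|[ha [_ H]]].
      apply: (val_triv r rr v M Mub) => x y h.
      by symmetry; exact: (triv_ai _ hs hi).
    move=> a b y h1 h2; have := H a b.
    have ny : lowset a b != set0 by apply/set0Pn; exists y; rewrite in_low; apply/andP.
    rewrite /minus_anti /plus_anti (ext_sup_fin v _ (hud a b)) (ext_inf_fin v _ ny) /= => h.
    apply: le_trans h _; rewrite addrC lerD2l.
    by case: (finf_spec v _ ny) => H' _; apply: H'; rewrite in_low; apply/andP.
  apply: (core_metric r rr rtr v siso M Mub Mach val) => x y.
  by [].
- move=> hud hs hlv.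
  pose r := fun x y : P => (y <= x)%O.
  have rr : forall x, r x x by move=> x; exact: lexx.
  have rtr : forall x y z, r x y -> r y z -> r x z.
    by move=> x y z h1 h2; exact: le_trans h2 h1.
  pose w := fun x => - v x.
  have siso : forall x y, r x y -> x <> y -> w x < w y.
    by move=> x y h ne; rewrite ltrN2; apply: hs; apply: ltP' => // e; apply: ne.
  pose M := fun x y => - finf v (upset x y).
  have Mub : forall x y z, r z x -> r z y -> w z <= M x y.
    move=> x y z h1 h2; rewrite lerN2; case: (finf_spec v _ (hud x y)) => H _; apply: H.
    by rewrite in_up; apply/andP.
  have Mach : forall x y, exists z, [/\ r z x, r z y & M x y = w z].
    move=> x y; case: (finf_spec v _ (hud x y)) => _ [z]; rewrite in_up => /andP[h1 h2] e.
    by exists z; split => //; rewrite /M e.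
  have val : forall a b y, r a y -> r b y -> w a + w b <= M a b + w y.
    case: hlv => [[hi [_ H]]|[ha _]]; last first.
      apply: (val_triv r rr w M Mub) => x y h.
      by symmetry; exact: (triv_ia _ hs ha).
    move=> a b y h1 h2; have := H a b.
    have ny : lowset a b != set0 by apply/set0Pn; exists y; rewrite in_low; apply/andP.
    rewrite /minus_iso /plus_iso (ext_sup_fin v _ ny) (ext_inf_fin v _ (hud a b)) /= => h.
    rewrite /w /M -!opprD lerN2; apply: le_trans h; rewrite addrC lerD2r.
    by case: (fsup_spec v _ ny) => H' _; apply: H'; rewrite in_low; apply/andP.
  apply: (core_metric r rr rtr w siso M Mub Mach val) => x y.
  by rewrite /w /M mulrN opprK [RHS]addrC addrA.
- move=> hdd hs hlv.
  pose r := fun x y : P => (x <= y)%O.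
  have rr : forall x, r x x by move=> x; exact: lexx.
  have rtr : forall x y z, r x y -> r y z -> r x z by move=> x y z; exact: le_trans.
  pose w := fun x => - v x.
  have siso : forall x y, r x y -> x <> y -> w x < w y.
    by move=> x y h ne; rewrite ltrN2; apply: hs; apply: ltP'.
  pose M := fun x y => - finf v (lowset x y).
  have Mub : forall x y z, r z x -> r z y -> w z <= M x y.
    move=> x y z h1 h2; rewrite lerN2; case: (finf_spec v _ (hdd x y)) => H _; apply: H.
    by rewrite in_low; apply/andP.
  have Mach : forall x y, exists z, [/\ r z x, r z y & M x y = w z].
    move=> x y; case: (finf_spec v _ (hdd x y)) => _ [z]; rewrite in_low => /andP[h1 h2] e.
    by exists z; split => //; rewrite /M e.
  have val : forall a b y, r a y -> r b y -> w a + w b <= M a b + w y.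
    case: hlv => [[hi _]|[ha [_ H]]].
      exact: (val_triv r rr w M Mub (triv_ai _ hs hi)).
    move=> a b y h1 h2; have := H a b.
    have ny : upset a b != set0 by apply/set0Pn; exists y; rewrite in_up; apply/andP.
    rewrite /minus_anti /plus_anti (ext_sup_fin v _ ny) (ext_inf_fin v _ (hdd a b)) /= => h.
    rewrite /w /M -!opprD lerN2; apply: le_trans h; rewrite lerD2l.
    by case: (fsup_spec v _ ny) => H' _; apply: H'; rewrite in_up; apply/andP.
  apply: (core_metric r rr rtr w siso M Mub Mach val) => x y.
  by rewrite /w /M mulrN opprK [RHS]addrC addrA.
Qed.
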